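(* For every positive integer $n$, the numerical semigroup $$S_n=\langle 15,\ 15+2^{n+2},\ 15+2^{n+2}+2^{n+1},\ 15+2^{n+2}+2^{n+1}+2^n\rangle$$ has embedding dimension four, is almost symmetric of type three, and $$\mathrm{PF}(S_n)=\{15+2^{n+3},\ 2(15+2^{n+3}),\ 3(15+2^{n+3})\}.$$
   Context: $\mathrm{PF}(S)$ is the set of integers $f\notin S$ with $f+s\in S$ for all $s\in S\setminus\{0\}$; the type is $|\mathrm{PF}(S)|$; $S$ is almost symmetric if $2|\mathbb{N}\setminus S|=F(S)+|\mathrm{PF}(S)|$, where $F(S)=\max(\mathbb{Z}\setminus S)$. *)

(* Defs.v *)
From HB Require Import structures.
From mathcomp Require Import all_boot all_order all_algebra.
Set Implicit Arguments. Unset Strict Implicit. Unset Printing Implicit Defensive.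
Import Order.TTheory GRing.Theory Num.Theory.
Local Open Scope ring_scope.

Definition sg (A : seq nat) (x : int) : Prop :=
  exists c : seq nat, size c = size A /\
    x = ((\sum_(i < size A) nth 0 c i * nth 0 A i)%N)%:Z.

Definition PF (S : int -> Prop) (f : int) : Prop :=
  ~ S f /\ forall s, S s -> s <> 0 -> S (f + s).

Definition is_frobenius (S : int -> Prop) (F : int) : Prop :=
  ~ S F /\ forall x, F < x -> S x.

Definition is_genus (S : int -> Prop) (g : nat) : Prop :=
  exists s : seq int, uniq s /\ size s = g /\
    forall x, x \in s <-> (0 <= x /\ ~ S x).

Definition is_type (S : int -> Prop) (t : nat) : Prop :=
  exists s : seq int, uniq s /\ size s = t /\
    forall f, f \in s <-> PF S f.

Definition almost_symmetric (S : int -> Prop) : Prop :=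
  exists (F : int) (g t : nat),
    is_frobenius S F /\ is_genus S g /\ is_type S t /\ (2 * g%:Z = F + t%:Z).

Definition min_gen (S : int -> Prop) (x : int) : Prop :=
  S x /\ x <> 0 /\ ~ (exists a b, S a /\ S b /\ a <> 0 /\ b <> 0 /\ x = a + b).

Definition is_embdim (S : int -> Prop) (e : nat) : Prop :=
  exists s : seq int, uniq s /\ size s = e /\
    forall x, x \in s <-> min_gen S x.

Definition Sn (n : nat) : seq nat :=
  [:: 15; 15 + 2 ^ n.+2; 15 + 2 ^ n.+2 + 2 ^ n.+1;
      15 + 2 ^ n.+2 + 2 ^ n.+1 + 2 ^ n]%N.

(* Main.v *)
Require Import Defs.
From HB Require Import structures.
From mathcomp Require Import all_boot all_order all_algebra.
From mathcomp Require Import zify.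
Import Order.TTheory GRing.Theory Num.Theory.
Local Open Scope nat_scope.


Definition Wt (w : nat) : nat := nth 0 [:: 0;16;17;18;4;20;6;7;8;24;10;11;12;13;14] w.
Definition Nt (w : nat) : nat := nth 0 [:: 0;3;3;3;1;3;1;1;2;4;2;2;2;2;2] w.



Lemma Wt_mod w : w < 15 -> Wt w %% 15 = w.
Proof. do 15 (try (case: w => [_|w])); last (by []); by []. Qed.
Lemma Wt_le w : Wt w <= 24.
Proof. do 15 (case: w => [//|w]); by case: w. Qed.
Lemma Nt_le w : Nt w <= 4.
Proof. do 15 (case: w => [//|w]); by case: w. Qed.

Lemma Wt_rep w : w < 15 -> exists j k l, 4 * j + 6 * k + 7 * l = Wt w /\ j+k+l = Nt w.
Proof.
do 15 (try (case: w => [_|w])); last (by []).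
- by exists 0, 0, 0.
- by exists 1, 2, 0.
- by exists 1, 1, 1.
- by exists 0, 3, 0.
- by exists 1, 0, 0.
- by exists 0, 1, 2.
- by exists 0, 1, 0.
- by exists 0, 0, 1.
- by exists 2, 0, 0.
- by exists 0, 4, 0.
- by exists 1, 1, 0.
- by exists 1, 0, 1.
- by exists 0, 2, 0.
- by exists 0, 1, 1.
- by exists 0, 0, 2.
Qed.

Definition chk j k l := let W := 4 * j + 6 * k + 7 * l in
  (Wt (W %% 15) <= W) && ((W == Wt (W %% 15)) ==> (Nt (W %% 15) <= j+k+l)).
Lemma minW_small : all (fun j => all (fun k => all (fun l => chk j k l) (iota 0 6)) (iota 0 6)) (iota 0 6).
Proof. by vm_compute. Qed.

Lemma minW j k l : let W := 4 * j + 6 * k + 7 * l in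
  Wt (W %% 15) <= W /\ (W = Wt (W %% 15) -> Nt (W %% 15) <= j+k+l).
Proof.
move=> W.
have hW : W = 4 * j + 6 * k + 7 * l by [].
have [big|small] := leqP 6 (j+k+l).
  have h1 := Wt_le (W %% 15); have h2 := Nt_le (W %% 15).
  clearbody W; split; [lia| move=> _; lia].
have hj : j \in iota 0 6 by rewrite mem_iota; lia.
have hk : k \in iota 0 6 by rewrite mem_iota; lia.
have hl : l \in iota 0 6 by rewrite mem_iota; lia.
move/allP: minW_small => /(_ _ hj) /allP /(_ _ hk) /allP /(_ _ hl).
rewrite /chk -/W => /andP[-> /implyP H]; split=> // e; apply: H; by apply/eqP.
Qed.


Definition e m w := 15 * Nt w + m * Wt w.
Definition wof m y := (m ^ 3 * y) %% 15.
Definition M m y := exists N j k l, j + k + l <= N /\ y = 15 * N + m * (4 * j + 6 * k + 7 * l).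

Lemma wof_mod m y : wof m y = wof m (y %% 15).
Proof. by rewrite /wof modnMmr. Qed.

Lemma wof_inj m y z : m ^ 4 %% 15 = 1 -> wof m y = wof m z -> y %% 15 = z %% 15.
Proof.
move=> H4 h.
have E x : x %% 15 = (m * (wof m x)) %% 15.
  by rewrite /wof modnMmr mulnA -expnS -modnMml H4 mul1n.
by rewrite (E y) (E z) h.
Qed.

Lemma wof_lin m N W : m ^ 4 %% 15 = 1 -> wof m (15 * N + m * W) = W %% 15.
Proof.
move=> H4; rewrite /wof mulnDr (mulnCA _ 15) mulnC modnMDl.
by rewrite mulnA -expnSr -modnMml H4 mul1n.
Qed.

Lemma e_wof m w : m ^ 4 %% 15 = 1 -> w < 15 -> wof m (e m w) = w.
Proof. by move=> H4 hw; rewrite /e wof_lin // Wt_mod. Qed.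

Lemma e_mem m w : w < 15 -> M m (e m w).
Proof.
move=> /Wt_rep [j [k [l [h1 h2]]]].
by exists (Nt w), j, k, l; rewrite h1 h2.
Qed.

Lemma memP m y : 0 < m -> m ^ 4 %% 15 = 1 -> M m y <-> e m (wof m y) <= y.
Proof.
move=> m0 H4; split.
  move=> [N [j [k [l [hN ->]]]]].
  rewrite wof_lin //.
  have [h1 h2] := minW j k l.
  set W := 4 * j + 6 * k + 7 * l in h1 h2 *.
  set w := W %% 15 in h1 h2 *.
  rewrite /e.
  have [eq|ne] := eqVneq W (Wt w).
    have := h2 eq; rewrite eq; lia.
  have hw : w < 15 by rewrite /w ltn_mod.
  have hm := Wt_mod _ hw.
  have hNt := Nt_le w.
  have hW : Wt w + 15 <= W.
    have d1 := divn_eq W 15. have d2 := divn_eq (Wt w) 15.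
    rewrite -/w in d1; rewrite hm in d2. lia.
  have hm15 : m * Wt w + 15 <= m * W.
    have : m * (Wt w + 15) <= m * W by rewrite leq_mul2l hW orbT.
    rewrite mulnDr; lia.
  have : 3 <= j + k + l by lia.
  lia.
move=> h.
set w := wof m y in h.
have hw : w < 15 by rewrite /w /wof ltn_mod.
have hc : y %% 15 = e m w %% 15 by apply: (wof_inj _ _ _ H4); rewrite e_wof.
have [N [j [k [l [hN he]]]]] := e_mem m _ hw.
exists (N + (y - e m w) %/ 15), j, k, l; split; first lia.
have d1 := divn_eq y 15. have d2 := divn_eq (e m w) 15.
have : y = e m w + (y - e m w) %/ 15 * 15.
  have -> : (y - e m w) = ((y %/ 15) - (e m w %/ 15)) * 15.
    rewrite mulnBl; lia.
  rewrite mulnK //; lia.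
lia.
Qed.


Lemma m_mod n : 2 ^ n %% 15 \in [:: 1; 2; 4; 8].
Proof.
elim: n => // n IH; rewrite expnS -modnMmr.
by move: IH; rewrite !inE => /or4P[] /eqP ->.
Qed.

Lemma m_pos n : 0 < 2 ^ n.
Proof. by rewrite expn_gt0. Qed.

Lemma m4 n : (2 ^ n) ^ 4 %% 15 = 1.
Proof.
rewrite -modnXm; move: (m_mod n); rewrite !inE => /or4P[] /eqP -> //.
Qed.

Lemma sgP n x : sg (Sn n) x <-> exists y, x = Posz y /\ M (2 ^ n) y.
Proof.
rewrite /sg /Sn /=; split.
  move=> [c [hc ->]]; eexists; split; first reflexivity.
  rewrite !big_ord_recl big_ord0 /= /bump /= !addn0 !add1n !expnS.
  exists (nth 0 c 0 + nth 0 c 1 + nth 0 c 2 + nth 0 c 3), (nth 0 c 1), (nth 0 c 2), (nth 0 c 3).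
  split; first lia.
  lia.
move=> [y [-> [N [j [k [l [hN ->]]]]]]].
exists [:: N - (j + k + l); j; k; l]; split => //.
rewrite !big_ord_recl big_ord0 /= /bump /= !expnS.
congr Posz; lia.
Qed.


Lemma e_le m w : e m w <= 60 + 24 * m.
Proof.
rewrite /e; have h1 := Nt_le w; have h2 := Wt_le w.
have : m * Wt w <= m * 24 by rewrite leq_mul2l h2 orbT.
lia.
Qed.

Lemma sum_gaps m : m %% 15 \in [:: 1; 2; 4; 8] ->
  sumn [seq e m w %/ 15 | w <- iota 0 15] = 24 + 12 * m.
Proof.
move=> hm; rewrite /= /e /Nt /Wt /=.
have d := divn_eq m 15.
move: hm; rewrite !inE => /or4P[] /eqP hr; rewrite hr in d; rewrite d; lia.
Qed.

Definition gapsN m := [seq e m w - 15 * q.+1 | w <- iota 0 15, q <- iota 0 (e m w %/ 15)].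

Lemma wof_eq m y z : y %% 15 = z %% 15 -> wof m y = wof m z.
Proof. by move=> h; rewrite wof_mod h -wof_mod. Qed.

Lemma gapP m y : 0 < m -> m ^ 4 %% 15 = 1 -> y \in gapsN m <-> ~ M m y.
Proof.
move=> m0 H4; rewrite memP //; split.
  move=> /allpairsPdep [w [q [hw hq ->]]].
  rewrite mem_iota in hw; rewrite mem_iota in hq.
  have dd := divn_eq (e m w) 15.
  have -> : wof m (e m w - 15 * q.+1) = w.
    rewrite -[RHS](e_wof m w H4); last by lia.
    apply: wof_eq.
    have d1 := divn_eq (e m w - 15 * q.+1) 15.
    lia.
  lia.
move=> /negP; rewrite -ltnNge => hy.
set w := wof m y in hy.
have hw : w < 15 by rewrite /w /wof ltn_mod.
have hc : y %% 15 = e m w %% 15 by apply: (wof_inj _ _ _ H4); rewrite e_wof.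
apply/allpairsPdep; exists w, ((e m w - y) %/ 15).-1.
rewrite !mem_iota.
have d1 := divn_eq y 15. have d2 := divn_eq (e m w) 15.
have d3 := divn_eq (e m w - y) 15.
split; lia.
Qed.

Lemma gaps_uniq m : 0 < m -> m ^ 4 %% 15 = 1 -> uniq (gapsN m).
Proof.
move=> m0 H4; apply: allpairs_uniq_dep; first exact: iota_uniq.
  by move=> w _; exact: iota_uniq.
move=> [w1 q1] [w2 q2] /allpairsPdep [x1 [y1 [h1 h1' [-> ->]]]].
move=> /allpairsPdep [x2 [y2 [h2 h2' [-> ->]]]] /= heq.
rewrite mem_iota in h1; rewrite mem_iota in h1'; rewrite mem_iota in h2; rewrite mem_iota in h2'.
have E x q : x < 15 -> q < e m x %/ 15 -> wof m (e m x - 15 * q.+1) = x.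
  move=> hx hq; rewrite -[RHS](e_wof m x H4) //; apply: wof_eq.
  have dd := divn_eq (e m x) 15.
  have d1 := divn_eq (e m x - 15 * q.+1) 15.
  lia.
have ex : x1 = x2.
  by rewrite -(E x1 y1) ?heq ?E //; lia.
subst x2.
have d := divn_eq (e m x1) 15.
have -> : y1 = y2 by lia.
by [].
Qed.


Lemma Sin n y : sg (Sn n) (Posz y) <-> M (2 ^ n) y.
Proof.
rewrite sgP; split; last by move=> h; exists y.
by move=> [z [[->] h]].
Qed.

Lemma Snonneg n x : sg (Sn n) x -> exists y, x = Posz y /\ M (2 ^ n) y.
Proof. by rewrite sgP. Qed.

Lemma M_add m y z : M m y -> M m z -> M m (y + z).
Proof.
move=> [N1 [j1 [k1 [l1 [h1 ->]]]]] [N2 [j2 [k2 [l2 [h2 ->]]]]].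
exists (N1 + N2), (j1 + j2), (k1 + k2), (l1 + l2); split; first lia.
rewrite !mulnDr; lia.
Qed.

Lemma M_gen m Wg : Wg \in [:: 0; 4; 6; 7] -> M m (15 + m * Wg).
Proof.
rewrite !inE => /or4P[] /eqP ->.
- by exists 1, 0, 0, 0; rewrite muln0.
- by exists 1, 1, 0, 0.
- by exists 1, 0, 1, 0.
- by exists 1, 0, 0, 1.
Qed.

Lemma M_dec m y : M m y -> y <> 0 ->
  exists Wg z, [/\ Wg \in [:: 0; 4; 6; 7], M m z & y = 15 + m * Wg + z].
Proof.
move=> [N [j [k [l [hN ->]]]]] hy.
have [hi|hi] := ltnP (j + k + l) N.
  exists 0, (15 * N.-1 + m * (4 * j + 6 * k + 7 * l)); split => //.
    by exists N.-1, j, k, l; split => //; lia.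
  rewrite muln0; lia.
case: j hN hi hy => [|j] hN hi hy.
  case: k hN hi hy => [|k] hN hi hy.
    case: l hN hi hy => [|l] hN hi hy.
      exfalso; apply: hy; have hN0 : N = 0 by lia. by rewrite hN0 !muln0.
    exists 7, (15 * N.-1 + m * (4 * 0 + 6 * 0 + 7 * l)); split => //.
      by exists N.-1, 0, 0, l; split => //; lia.
    rewrite !mulnDr; lia.
  exists 6, (15 * N.-1 + m * (4 * 0 + 6 * k + 7 * l)); split => //.
    by exists N.-1, 0, k, l; split => //; lia.
  rewrite !mulnDr; lia.
exists 4, (15 * N.-1 + m * (4 * j + 6 * k + 7 * l)); split => //.
  by exists N.-1, j, k, l; split => //; lia.
rewrite !mulnDr; lia.
Qed.

Lemma M_ge15 m y : M m y -> y <> 0 -> 15 <= y.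
Proof.
move=> hM hy; have [Wg [z [_ _ ->]]] := M_dec _ _ hM hy; lia.
Qed.

Lemma memb_lin m N W : 0 < m -> m ^ 4 %% 15 = 1 ->
  M m (15 * N + m * W) <-> e m (W %% 15) <= 15 * N + m * W.
Proof. by move=> m0 H4; rewrite memP // wof_lin. Qed.

Lemma int_test (a b : nat) : (2 * Posz a = Posz b + Posz 3)%R -> b = (2 * a - 3).
Proof. lia. Qed.


Lemma PF_up m Na Wa Wg : 0 < m -> m ^ 4 %% 15 = 1 ->
  (Na == 1) && (Wa == 8) || (Na == 2) && (Wa == 16) || (Na == 3) && (Wa == 24) ->
  Wg \in [:: 0; 4; 6; 7] -> M m (15 * (Na + 1) + m * (Wa + Wg)).
Proof.
move=> m0 H4 h hg; apply/memb_lin => //.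
move: h => /orP[/orP[]|]/andP[]/eqP-> /eqP->; move: hg; rewrite !inE => /or4P[]/eqP->;
  rewrite /e /Nt /Wt /=; lia.
Qed.

Lemma PF_notin m Na Wa : 0 < m -> m ^ 4 %% 15 = 1 ->
  (Na == 1) && (Wa == 8) || (Na == 2) && (Wa == 16) || (Na == 3) && (Wa == 24) ->
  ~ M m (15 * Na + m * Wa).
Proof.
move=> m0 H4 h; rewrite memb_lin //.
move: h => /orP[/orP[]|]/andP[]/eqP-> /eqP->; rewrite /e /Nt /Wt /=; lia.
Qed.

Lemma notPF m y w Wg : 0 < m -> m ^ 4 %% 15 = 1 -> y + 15 = e m w ->
  e m ((Wt w + Wg) %% 15) = 15 * (Nt w + 1) + m * (Wt w + Wg) ->
  ~ M m (y + (15 + m * Wg)).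
Proof.
move=> m0 H4 hy he.
have -> : y + (15 + m * Wg) = 15 * Nt w + m * (Wt w + Wg).
  by move: hy; rewrite /e mulnDr; lia.
rewrite memb_lin // he; lia.
Qed.

Lemma PFchar n f : PF (sg (Sn n)) f <->
  (f = Posz (15 * 1 + 2 ^ n * 8) \/ f = Posz (15 * 2 + 2 ^ n * 16) \/
   f = Posz (15 * 3 + 2 ^ n * 24)).
Proof.
have m0 := m_pos n; have H4 := m4 n.
split; last first.
  move=> hf.
  have [Na [Wa [hNW ->]]] : exists Na Wa,
      ((Na == 1) && (Wa == 8) || (Na == 2) && (Wa == 16) || (Na == 3) && (Wa == 24))
      /\ f = Posz (15 * Na + 2 ^ n * Wa).
    by case: hf => [->|[->|->]]; [exists 1, 8 | exists 2, 16 | exists 3, 24].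
  split.
    by move/Sin; apply: PF_notin.
  move=> s /Snonneg [y [-> hy]] hs0.
  have y0 : y <> 0 by move=> h; apply: hs0; rewrite h.
  have [Wg [z [hg hz ->]]] := M_dec _ _ hy y0.
  rewrite -PoszD; apply/Sin.
  have -> : 15 * Na + 2 ^ n * Wa + (15 + 2 ^ n * Wg + z) =
     15 * (Na + 1) + 2 ^ n * (Wa + Wg) + z by rewrite !mulnDr; lia.
  apply: M_add => //; exact: PF_up.
move=> [hnS hPF].
have g15 : sg (Sn n) (Posz 15) by apply/Sin; have := M_gen (2 ^ n) 0; rewrite muln0 addn0; apply.
have g4 : sg (Sn n) (Posz (15 + 2 ^ n * 4)) by apply/Sin; apply: M_gen.
have g6 : sg (Sn n) (Posz (15 + 2 ^ n * 6)) by apply/Sin; apply: M_gen.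
have g7 : sg (Sn n) (Posz (15 + 2 ^ n * 7)) by apply/Sin; apply: M_gen.
case: f hnS hPF => [y|y] hnS hPF; last first.
  exfalso.
  have [z [hz hMz]] := Snonneg _ _ (hPF _ g15 ltac:(by [])).
  have z0 : z = 0.
    apply/eqP; apply: contraT => /eqP z0.
    have := M_ge15 _ _ hMz z0. lia.
  have hy : y = 14 by lia.
  have [u [hu hMu]] := Snonneg _ _ (hPF _ g4 ltac:(lia)).
  have hu' : u = 15 * 0 + 2 ^ n * 4 by lia.
  move: hMu; rewrite hu' memb_lin // /e /Nt /Wt /=; lia.
have hnM : ~ M (2 ^ n) y by move=> h; apply: hnS; apply/Sin.
have h15 : M (2 ^ n) (y + 15) by apply/Sin; rewrite PoszD; apply: hPF g15 _.
move: hnM; rewrite memP // => /negP; rewrite -ltnNge => hlt.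
move: h15; rewrite memP //.
have -> : wof (2 ^ n) (y + 15) = wof (2 ^ n) y by apply: wof_eq; lia.
set w := wof (2 ^ n) y in hlt *.
have hw : w < 15 by rewrite /w /wof ltn_mod.
have hc : y %% 15 = e (2 ^ n) w %% 15 by apply: (wof_inj _ _ _ H4); rewrite e_wof.
move=> hle.
have hyw : y + 15 = e (2 ^ n) w.
  have d1 := divn_eq y 15. have d2 := divn_eq (e (2 ^ n) w) 15. lia.
have P4 : M (2 ^ n) (y + (15 + 2 ^ n * 4)) by apply/Sin; rewrite PoszD; apply: hPF g4 _; lia.
have P6 : M (2 ^ n) (y + (15 + 2 ^ n * 6)) by apply/Sin; rewrite PoszD; apply: hPF g6 _; lia.
have P7 : M (2 ^ n) (y + (15 + 2 ^ n * 7)) by apply/Sin; rewrite PoszD; apply: hPF g7 _; lia.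
clearbody w; clear hlt hc hle; move: hw hyw P4 P6 P7.
do 15 (try (case: w => [_|w])); last (by rewrite !ltnS ltn0);
  move=> hyw P4 P6 P7; rewrite /e /Nt /Wt /= in hyw.
- lia.
- by right; left; congr Posz; lia.
- by exfalso; apply: (notPF _ y 2 7 m0 H4) => //; rewrite /e /Nt /Wt /=; lia.
- by exfalso; apply: (notPF _ y 3 6 m0 H4) => //; rewrite /e /Nt /Wt /=; lia.
- by exfalso; apply: (notPF _ y 4 6 m0 H4) => //; rewrite /e /Nt /Wt /=; lia.
- by exfalso; apply: (notPF _ y 5 4 m0 H4) => //; rewrite /e /Nt /Wt /=; lia.
- by exfalso; apply: (notPF _ y 6 4 m0 H4) => //; rewrite /e /Nt /Wt /=; lia.
- by exfalso; apply: (notPF _ y 7 4 m0 H4) => //; rewrite /e /Nt /Wt /=; lia.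
- by left; congr Posz; lia.
- by right; right; congr Posz; lia.
- by exfalso; apply: (notPF _ y 10 6 m0 H4) => //; rewrite /e /Nt /Wt /=; lia.
- by exfalso; apply: (notPF _ y 11 6 m0 H4) => //; rewrite /e /Nt /Wt /=; lia.
- by exfalso; apply: (notPF _ y 12 6 m0 H4) => //; rewrite /e /Nt /Wt /=; lia.
- by exfalso; apply: (notPF _ y 13 7 m0 H4) => //; rewrite /e /Nt /Wt /=; lia.
- by exfalso; apply: (notPF _ y 14 4 m0 H4) => //; rewrite /e /Nt /Wt /=; lia.
Qed.




Lemma nodec m Wg ya yb : 0 < m -> m ^ 4 %% 15 = 1 -> Wg < 15 ->
  M m ya -> M m yb -> ya <> 0 -> yb <> 0 -> 15 + m * Wg = ya + yb -> False.
Proof.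
move=> m0 H4 hWg [Na [ja [ka [la [ha ea]]]]] [Nb [jb [kb [lb [hb eb]]]]] ya0 yb0 hs.
have Na1 : 1 <= Na.
  case: Na ha ea => // ha ea; exfalso; apply: ya0; rewrite ea.
  have [-> -> ->] : [/\ ja = 0, ka = 0 & la = 0] by split; lia.
  by rewrite !muln0.
have Nb1 : 1 <= Nb.
  case: Nb hb eb => // hb eb; exfalso; apply: yb0; rewrite eb.
  have [-> -> ->] : [/\ jb = 0, kb = 0 & lb = 0] by split; lia.
  by rewrite !muln0.
set Wa := 4 * ja + 6 * ka + 7 * la in ea.
set Wb := 4 * jb + 6 * kb + 7 * lb in eb.
have E : 15 + m * Wg = 15 * (Na + Nb) + m * (Wa + Wb) by rewrite hs ea eb mulnDr; lia.
have hw : Wg %% 15 = (Wa + Wb) %% 15.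
  have := congr1 (wof m) E; rewrite -{1}(muln1 15) !wof_lin //.
have hlt : m * (Wa + Wb) < m * Wg by lia.
rewrite ltn_pmul2l // in hlt.
move: hw; rewrite !modn_small //; lia.
Qed.

Lemma mingenP n x : min_gen (sg (Sn n)) x <->
  exists Wg, Wg \in [:: 0; 4; 6; 7] /\ x = Posz (15 + 2 ^ n * Wg).
Proof.
have m0 := m_pos n; have H4 := m4 n.
split.
  move=> [/Snonneg [y [-> hy]] [h0 hnd]].
  have y0 : y <> 0 by move=> h; apply: h0; rewrite h.
  have [Wg [z [hg hz hyz]]] := M_dec _ _ hy y0.
  exists Wg; split => //.
  have [z0|z0] := eqVneq z 0; first by rewrite hyz z0 addn0.
  exfalso; apply: hnd; exists (Posz (15 + 2 ^ n * Wg)), (Posz z).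
  split; first by apply/Sin; apply: M_gen.
  split; first by apply/Sin.
  split; first by lia.
  split; first by move=> [] /eqP; rewrite (negPf z0).
  by rewrite hyz PoszD.
move=> [Wg [hg ->]].
split; first by apply/Sin; apply: M_gen.
split; first by lia.
move=> [a [b [/Snonneg [ya [-> hya]] [/Snonneg [yb [-> hyb]] [ha [hb hs]]]]]].
have hWg : Wg < 15 by move: hg; rewrite !inE => /or4P[]/eqP->.
apply: (nodec _ _ _ _ m0 H4 hWg hya hyb).
- by move=> h; apply: ha; rewrite h.
- by move=> h; apply: hb; rewrite h.
- by move: hs; rewrite -PoszD => -[].
Qed.

Lemma embdim n : is_embdim (sg (Sn n)) 4.
Proof.
have m0 := m_pos n.
exists [:: Posz (15 + 2 ^ n * 0); Posz (15 + 2 ^ n * 4); Posz (15 + 2 ^ n * 6); Posz (15 + 2 ^ n * 7)].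
split.
  rewrite /= !inE; lia.
split => // x; rewrite mingenP; split.
  rewrite !inE => /or4P[]/eqP->; [exists 0|exists 4|exists 6|exists 7]; by split.
move=> [Wg [hg ->]]; move: hg; rewrite !inE => /or4P[]/eqP-> ; by rewrite eqxx ?orbT.
Qed.

Lemma frob n : is_frobenius (sg (Sn n)) (Posz (45 + 24 * 2 ^ n)).
Proof.
have m0 := m_pos n; have H4 := m4 n.
split.
  rewrite Sin (_ : 45 + 24 * 2 ^ n = 15 * 3 + 2 ^ n * 24); last by lia.
  rewrite memb_lin // /e /Nt /Wt /=; lia.
case=> [y|y] hy; last by exfalso; move: hy; lia.
apply/Sin; rewrite memP //.
set w := wof (2 ^ n) y.
have hw : w < 15 by rewrite /w /wof ltn_mod.
have hc : y %% 15 = e (2 ^ n) w %% 15 by apply: (wof_inj _ _ _ H4); rewrite e_wof.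
have hle := e_le (2 ^ n) w.
have d1 := divn_eq y 15. have d2 := divn_eq (e (2 ^ n) w) 15.
have : 45 + 24 * 2 ^ n < y by move: hy; lia.
lia.
Qed.

Lemma genus n : is_genus (sg (Sn n)) (24 + 12 * 2 ^ n).
Proof.
have m0 := m_pos n; have H4 := m4 n.
exists (map Posz (gapsN (2 ^ n))).
split.
  rewrite map_inj_uniq; first exact: gaps_uniq.
  by move=> a b [].
split.
  rewrite size_map /gapsN size_allpairs_dep -(sum_gaps _ (m_mod n)).
  by congr sumn; apply: eq_map => w; rewrite size_iota.
move=> x; split.
  move=> /mapP [y hy ->]; split => //.
  by rewrite Sin -gapP.
case: x => [y|y] [hy hS]; last by exfalso; move: hy; lia.
by rewrite mem_map; [rewrite gapP // -Sin | move=> a b []].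
Qed.

Lemma typ n : is_type (sg (Sn n)) 3.
Proof.
have m0 := m_pos n.
exists [:: Posz (15 * 1 + 2 ^ n * 8); Posz (15 * 2 + 2 ^ n * 16); Posz (15 * 3 + 2 ^ n * 24)].
split; first by rewrite /= !inE; lia.
split => // f; rewrite PFchar !inE; split.
  by move=> /orP[|/orP[]] /eqP ->; auto.
by move=> [->|[->|->]]; rewrite eqxx ?orbT.
Qed.

Local Open Scope ring_scope.

Theorem mainTheorem9 (n : nat) (hn : (0 < n)%N) :
  let S := sg (Sn n) in
  let a : int := (15 + 2 ^ n.+3)%N%:Z in
  is_embdim S 4 /\ almost_symmetric S /\ is_type S 3 /\
  (forall f : int, PF S f <-> (f = a \/ f = 2 * a \/ f = 3 * a)).
Proof.
move=> S a.
split; first exact: embdim.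
split.
  exists (Posz (45 + 24 * 2 ^ n)), (24 + 12 * 2 ^ n)%N, 3%N.
  split; first exact: frob.
  split; first exact: genus.
  split; first exact: typ.
  lia.
split; first exact: typ.
move=> f; rewrite /S PFchar /a.
have e8 : (2 ^ n.+3 = 8 * 2 ^ n)%N by rewrite !expnS; lia.
rewrite e8.
have E1 : Posz (15 * 1 + 2 ^ n * 8) = Posz (15 + 8 * 2 ^ n) by congr Posz; lia.
have E2 : Posz (15 * 2 + 2 ^ n * 16) = 2 * Posz (15 + 8 * 2 ^ n) by lia.
have E3 : Posz (15 * 3 + 2 ^ n * 24) = 3 * Posz (15 + 8 * 2 ^ n) by lia.
by rewrite E1 E2 E3.
Qed.
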